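(* Let $(X,\tau)$ be a $\mathbb{B}$-topological space. (i) $(X,\tau)$ is $R_0$ if and only if both topological spaces $(X,\tau[tt])$ and $(X,\tau[ff])$ are $R_0$. (ii) $(X,\tau)$ is $T_1$ if and only if the topological space $(X,\tau[tt]\vee\tau[ff])$ is $T_0$ and both $(X,\tau[tt])$ and $(X,\tau[ff])$ are $R_0$.
   Context: $\mathbb{B}=\{0,1,tt,ff\}$ is the four-element Boolean algebra with bottom $0$, top $1$, and $tt,ff$ incomparable complements; $a\to b=\neg a\vee b$. A $\mathbb{B}$-topology on $X$ is $\tau\subseteq\mathbb{B}^X$ containing all constant maps and closed under arbitrary pointwise joins and finite pointwise meets; $\tau[b]=\{\lambda[b]:\lambda\in\tau\}$ with $\lambda[b]=\{x:\lambda(x)\ge b\}$, for $b\in\{tt,ff\}$, are topologies; $\tau[tt]\vee\tau[ff]$ is the topology generated by their union. Specialization $\mathbb{B}$-order: $\Omega(\tau)(x,y)=\bigwedge_{\lambda\in\tau}(\lambda(x)\to\lambda(y))$. $(X,\tau)$ is $R_0$ if $\Omega(\tau)(x,y)=\Omega(\tau)(y,x)$ for all $x,y$; $T_0$ if $\Omega(\tau)(x,y)=1=\Omega(\tau)(y,x)$ implies $x=y$; $T_1$ if both $T_0$ and $R_0$. A topological space is $R_0$ if every open set containing a point contains the closure of that point's singleton. *)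

(* Defs.v *)
From Stdlib Require Import Bool ClassicalEpsilon.

(** The four-element Boolean algebra B = {0,1,tt,ff}, modelled as bool * bool
    with the componentwise order: 0 = (false,false), 1 = (true,true),
    tt = (true,false), ff = (false,true). *)
Definition B : Type := (bool * bool)%type.
Definition B0 : B := (false, false).
Definition B1 : B := (true, true).
Definition Btt : B := (true, false).
Definition Bff : B := (false, true).

Definition Ble (a b : B) : bool := implb (fst a) (fst b) && implb (snd a) (snd b).
Definition Bmeet (a b : B) : B := (fst a && fst b, snd a && snd b).
Definition Bjoin (a b : B) : B := (fst a || fst b, snd a || snd b).
Definition Bneg (a : B) : B := (negb (fst a), negb (snd a)).
Definition Bimpl (a b : B) : B := Bjoin (Bneg a) b.

Definition decide (P : Prop) : bool :=
  if excluded_middle_informative P then true else false.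

Definition Bsup (S : B -> Prop) : B :=
  (decide (exists a, S a /\ fst a = true), decide (exists a, S a /\ snd a = true)).
Definition Binf (S : B -> Prop) : B :=
  (decide (forall a, S a -> fst a = true), decide (forall a, S a -> snd a = true)).

Definition is_Btopology {X : Type} (tau : (X -> B) -> Prop) : Prop :=
  (forall c : B, tau (fun _ => c)) /\
  (forall F : (X -> B) -> Prop, (forall l, F l -> tau l) ->
     tau (fun x => Bsup (fun c => exists l, F l /\ c = l x))) /\
  (forall l m, tau l -> tau m -> tau (fun x => Bmeet (l x) (m x))).

(** tau[b] = { lambda[b] : lambda in tau }, lambda[b] = { x : b <= lambda x }. *)
Definition cut {X : Type} (tau : (X -> B) -> Prop) (b : B) (U : X -> Prop) : Prop :=
  exists l, tau l /\ forall x, U x <-> Ble b (l x) = true.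

Definition Omega {X : Type} (tau : (X -> B) -> Prop) (x y : X) : B :=
  Binf (fun c => exists l, tau l /\ c = Bimpl (l x) (l y)).

Definition BR0 {X : Type} (tau : (X -> B) -> Prop) : Prop :=
  forall x y, Omega tau x y = Omega tau y x.
Definition BT0 {X : Type} (tau : (X -> B) -> Prop) : Prop :=
  forall x y, Omega tau x y = B1 -> Omega tau y x = B1 -> x = y.
Definition BT1 {X : Type} (tau : (X -> B) -> Prop) : Prop :=
  BT0 tau /\ BR0 tau.

Definition is_topology {X : Type} (T : (X -> Prop) -> Prop) : Prop :=
  (forall F : (X -> Prop) -> Prop, (forall V, F V -> T V) ->
     forall U, (forall x, U x <-> exists V, F V /\ V x) -> T U) /\
  (forall U V W, T U -> T V -> (forall x, W x <-> U x /\ V x) -> T W) /\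
  T (fun _ => True).

Definition generated {X : Type} (S : (X -> Prop) -> Prop) (U : X -> Prop) : Prop :=
  forall T, is_topology T -> (forall V, S V -> T V) -> T U.

Definition sup_top {X : Type} (T1 T2 : (X -> Prop) -> Prop) : (X -> Prop) -> Prop :=
  generated (fun V => T1 V \/ T2 V).

(** Closure of a singleton {x}: y is in it iff every open set containing y contains x. *)
Definition closure1 {X : Type} (T : (X -> Prop) -> Prop) (x y : X) : Prop :=
  forall V, T V -> V y -> V x.

Definition R0 {X : Type} (T : (X -> Prop) -> Prop) : Prop :=
  forall U x, T U -> U x -> forall y, closure1 T x y -> U y.

Definition T0 {X : Type} (T : (X -> Prop) -> Prop) : Prop :=
  forall x y, (forall U, T U -> (U x <-> U y)) -> x = y.

(* Main.v *)
Require Import Defs.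
From Stdlib Require Import Bool ClassicalEpsilon.

Lemma decide_true (P : Prop) : decide P = true <-> P.
Proof. unfold decide; destruct (excluded_middle_informative P); split; intuition congruence. Qed.

Lemma decide_iff (P Q : Prop) : (P <-> Q) -> decide P = decide Q.
Proof. intros H; unfold decide;
  destruct (excluded_middle_informative P), (excluded_middle_informative Q); tauto. Qed.

Lemma decide_eq (P Q : Prop) : decide P = decide Q -> (P <-> Q).
Proof. intros H; unfold decide in H;
  destruct (excluded_middle_informative P), (excluded_middle_informative Q); try tauto; discriminate. Qed.

Definition Sp {X} (T : (X -> Prop) -> Prop) (x y : X) := forall U, T U -> U x -> U y.

Lemma Omega_eq {X} (tau : (X -> B) -> Prop) x y :
  Omega tau x y = (decide (Sp (cut tau Btt) x y), decide (Sp (cut tau Bff) x y)).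
Proof.
  unfold Omega, Binf; f_equal; apply decide_iff; split.
  - intros H U [l [Hl HU]] Ux. apply HU. apply HU in Ux.
    specialize (H _ (ex_intro _ l (conj Hl eq_refl))).
    destruct (l x) as [a b], (l y) as [c d]; simpl in *; destruct a, c; simpl in *; auto.
  - intros H a [l [Hl ->]].
    specialize (H (fun z => Ble Btt (l z) = true) (ex_intro _ l (conj Hl (fun z => iff_refl _)))).
    simpl in H. destruct (l x) as [a b], (l y) as [c d]; simpl in *; destruct a, c; simpl in *; auto.
  - intros H U [l [Hl HU]] Ux. apply HU. apply HU in Ux.
    specialize (H _ (ex_intro _ l (conj Hl eq_refl))).
    destruct (l x) as [a b], (l y) as [c d]; simpl in *; destruct b, d; simpl in *; auto.
  - intros H a [l [Hl ->]].
    specialize (H (fun z => Ble Bff (l z) = true) (ex_intro _ l (conj Hl (fun z => iff_refl _)))).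
    simpl in H. destruct (l x) as [a b], (l y) as [c d]; simpl in *; destruct b, d, a, c; simpl in *; auto.
Qed.

Lemma R0_iff {X} (T : (X -> Prop) -> Prop) : R0 T <-> forall x y, (Sp T x y <-> Sp T y x).
Proof.
  unfold R0, closure1, Sp; split.
  - intros H x y; split; intros H1 U HU Ux; eapply H; eauto.
  - intros H U x HU Ux y Hc. apply (proj2 (H x y) Hc U HU Ux).
Qed.

Lemma BR0_iff {X} (tau : (X -> B) -> Prop) :
  BR0 tau <-> R0 (cut tau Btt) /\ R0 (cut tau Bff).
Proof.
  unfold BR0; rewrite !R0_iff; split.
  - intros H; split; intros x y; specialize (H x y); rewrite !Omega_eq in H;
      injection H; intros; apply decide_eq; auto.
  - intros [H1 H2] x y; rewrite !Omega_eq; f_equal; apply decide_iff; auto.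
Qed.

Lemma sup_indist {X} (T1 T2 : (X -> Prop) -> Prop) x y :
  (forall U, sup_top T1 T2 U -> (U x <-> U y)) <->
  ((forall U, T1 U -> (U x <-> U y)) /\ (forall U, T2 U -> (U x <-> U y))).
Proof.
  split.
  - intros H; split; intros U HU; apply H; intros T _ HT; apply HT.
    + left; exact HU.
    + right; exact HU.
  - intros [H1 H2] U HU. apply (HU (fun V => V x <-> V y)).
    + split; [|split].
      * intros F HF U0 HU0. rewrite !HU0. split; intros [V [FV Vz]]; exists V; split; auto;
          apply (HF V FV); auto.
      * intros U0 V W HU0 HV HW. rewrite !HW. tauto.
      * tauto.
    + intros V [HV|HV]; auto.
Qed.

Lemma BT0_iff {X} (tau : (X -> B) -> Prop) :
  BT0 tau <-> T0 (sup_top (cut tau Btt) (cut tau Bff)).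
Proof.
  unfold BT0, T0. split.
  - intros H x y Hi. apply sup_indist in Hi. destruct Hi as [H1 H2].
    apply H; rewrite Omega_eq; unfold B1; f_equal; apply decide_true;
      intros U HU Ux; first [apply (H1 U HU); exact Ux | apply (H2 U HU); exact Ux].
  - intros H x y Hxy Hyx. rewrite Omega_eq in Hxy, Hyx. unfold B1 in *.
    injection Hxy; injection Hyx; intros a b c d.
    apply (proj1 (decide_true _)) in a, b, c, d. apply H. apply sup_indist.
    split; intros U HU; split; intros Hu; first [exact (a U HU Hu) | exact (b U HU Hu) | exact (c U HU Hu) | exact (d U HU Hu)].
Qed.

Theorem mainTheorem13 (X : Type) (tau : (X -> B) -> Prop) :
  is_Btopology tau ->
  (BR0 tau <-> R0 (cut tau Btt) /\ R0 (cut tau Bff)) /\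
  (BT1 tau <-> T0 (sup_top (cut tau Btt) (cut tau Bff)) /\
                R0 (cut tau Btt) /\ R0 (cut tau Bff)).
Proof.
  intros _. split.
  - apply BR0_iff.
  - unfold BT1. rewrite BT0_iff, BR0_iff. tauto.
Qed.
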